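(* Let $a,b,d$ be positive integers with $d$ not a perfect square, and let $\varepsilon=(t+u\sqrt d)/2\ne\pm1$, with $t,u$ integers, be a unit of the ring of integers of $\mathbb{Q}(\sqrt d)$. Define $x_k,y_k$ for $k\ge0$ by $x_k+y_k\sqrt d=(a+b\sqrt d)\varepsilon^k$. If $x_k$ and $y_k$ are both integers and $\gcd(a,b)$ is odd, then $\gcd(x_k,y_k)/\gcd(a,b)\in\{1,2\}$. *)

(* Defs.v *)
From mathcomp Require Import all_boot all_order all_algebra.
Set Implicit Arguments. Unset Strict Implicit. Unset Printing Implicit Defensive.
Import Order.TTheory GRing.Theory Num.Theory.
Local Open Scope ring_scope.

(* Elements x + y sqrt d of Q(sqrt d) (d not a square) are represented by
   the pair (x, y) : rat * rat; this representation is unique. *)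

(* Multiplication by eps = (t + u sqrt d)/2 :
   (x + y sqrt d)(t + u sqrt d)/2 = (x t + d y u)/2 + ((x u + y t)/2) sqrt d *)
Definition mul_eps (d t u : int) (p : rat * rat) : rat * rat :=
  ((p.1 * t%:~R + d%:~R * p.2 * u%:~R) / 2%:R,
   (p.1 * u%:~R + p.2 * t%:~R) / 2%:R).

Definition xy_seq (a b d : nat) (t u : int) (k : nat) : rat * rat :=
  iter k (mul_eps d%:Z t u) (a%:R, b%:R).

(* eps = (t + u sqrt d)/2 (t, u integers) is a unit of the ring of integers of
   Q(sqrt d): its norm (t^2 - d u^2)/4 is +-1. *)
Definition is_quad_unit (d : nat) (t u : int) : Prop :=
  t ^+ 2 - d%:Z * u ^+ 2 = 4 \/ t ^+ 2 - d%:Z * u ^+ 2 = -4.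

(* Main.v *)
Require Import Defs.
From mathcomp Require Import all_boot all_order all_algebra zify ring lra.
Import Order.TTheory GRing.Theory Num.Theory.
Local Open Scope ring_scope.

Lemma sq_par (x : int) : exists w : int, x * x - x = 2 * w.
Proof.
have E := divz_eq x 2.
have H1 : 0 <= (x %% 2)%Z by apply: modz_ge0.
have H2 : (x %% 2 < 2)%Z by apply: ltz_mod.
set q := (x %/ 2)%Z in E; set r := (x %% 2)%Z in E H1 H2.
have : r = 0 \/ r = 1 by lia.
case=> Hr; rewrite Hr in E.
- exists (2 * q * q - q); rewrite E; ring.
- exists (q * (2 * q + 1)); rewrite E; ring.
Qed.

Definition nrm (d s v : int) := s * s - d * v * v = 4 \/ s * s - d * v * v = -4.

Lemma nrm_par d s v : nrm d s v -> exists A, s = d * v + 2 * A.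
Proof.
move=> Hn.
have [w1 E1] := sq_par s. have [w2 E2] := sq_par v.
case: Hn => Hn.
- exists (2 - w1 + d * w2). lia.
- exists (-2 - w1 + d * w2). lia.
Qed.

Lemma nrm_step d s v t u : nrm d s v -> nrm d t u ->
  exists s' v', [/\ 2 * s' = s * t + d * v * u, 2 * v' = s * u + v * t & nrm d s' v'].
Proof.
move=> Hs Ht.
have [A EA] := nrm_par _ _ _ Hs. have [B EB] := nrm_par _ _ _ Ht.
have [w3 E3] := sq_par d.
exists (A * d * u + B * d * v + 2 * A * B + u * v * (w3 + d)).
exists (d * u * v + A * u + B * v).
have K1 : 2 * (A * d * u + B * d * v + 2 * A * B + u * v * (w3 + d)) = s * t + d * v * u.
  have Ed : d * d = 2 * w3 + d by lia.
  have : u * v * (d * d) = u * v * (2 * w3 + d) by rewrite Ed.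
  rewrite EA EB; lia.
have K2 : 2 * (d * u * v + A * u + B * v) = s * u + v * t by rewrite EA EB; ring.
split => //.
set s' := (A * d * u + B * d * v + 2 * A * B + u * v * (w3 + d)) in K1 *.
set v' := (d * u * v + A * u + B * v) in K2 *.
have K : 4 * (s' * s' - d * v' * v') = (s * s - d * v * v) * (t * t - d * u * u).
  have -> : 4 * (s' * s' - d * v' * v') = (2 * s') * (2 * s') - d * (2 * v') * (2 * v') by ring.
  rewrite K1 K2; ring.
case: Hs => Hs; case: Ht => Ht; rewrite Hs Ht in K; [left|right|right|left]; lia.
Qed.

Lemma inv (a b d : nat) (t u : int) : nrm d t u -> forall k,
  exists s v, nrm d s v /\ xy_seq a b d t u k =
    (((a%:Z * s + d%:Z * b%:Z * v)%:~R / 2), ((a%:Z * v + b%:Z * s)%:~R / 2)).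
Proof.
move=> Ht; elim=> [|k IHk].
  exists 2, 0; split; first by left; ring.
  by rewrite /xy_seq /=; congr (_, _); rewrite !intrD !intrM /=; field.
have [s [v [Hs IH]]] := IHk.
have [s' [v' [K1 K2 Hn]]] := nrm_step _ _ _ _ _ Hs Ht.
exists s', v'; split => //.
rewrite /xy_seq iterS -/(xy_seq a b d t u k) IH /mul_eps /=.
have R1 : (s'%:~R : rat) = (s%:~R * t%:~R + (d%:Z)%:~R * v%:~R * u%:~R) / 2.
  have H := congr1 (fun z : int => z%:~R : rat) K1; rewrite /= !intrD !intrM in H.
  by rewrite -H; field.
have R2 : (v'%:~R : rat) = (s%:~R * u%:~R + v%:~R * t%:~R) / 2.
  have H := congr1 (fun z : int => z%:~R : rat) K2; rewrite /= !intrD !intrM in H.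
  by rewrite -H; field.
by congr (_, _); rewrite !intrD !intrM R1 R2 /=; field.
Qed.

Theorem lemma3p10 (a b d : nat) (t u : int) :
  (0 < a)%N -> (0 < b)%N -> (0 < d)%N ->
  (forall m : nat, (m * m)%N <> d) ->
  is_quad_unit d t u ->
  ~ (u = 0 /\ (t = 2 \/ t = -2)) ->
  forall (k : nat) (X Y : int),
    xy_seq a b d t u k = (X%:~R, Y%:~R) ->
    odd (gcdn a b) ->
    gcdz X Y = (gcdn a b)%:Z \/ gcdz X Y = (2 * gcdn a b)%N%:Z.
Proof.
move=> a0 b0 d0 _ Hq _ k X Y HXY godd.
have Ht : nrm d t u by rewrite /nrm -!mulrA -!expr2; exact: Hq.
have [s [v [Hs E]]] := inv a b d t u Ht k.
rewrite E in HXY; case: HXY => H1 H2.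
have EX : 2 * X = a%:Z * s + d%:Z * b%:Z * v.
  by apply: (@intr_inj rat); rewrite intrM -H1; field.
have EY : 2 * Y = a%:Z * v + b%:Z * s.
  by apply: (@intr_inj rat); rewrite intrM -H2; field.
set g := gcdn a b in godd *.
have g0 : (0 < g)%N by rewrite gcdn_gt0 a0.
have [a1 Ea] : exists a1, a = (a1 * g)%N by exists (a %/ g)%N; rewrite divnK // dvdn_gcdl.
have [b1 Eb] : exists b1, b = (b1 * g)%N by exists (b %/ g)%N; rewrite divnK // dvdn_gcdr.
have cop : coprimez g%:Z 2 by rewrite coprimezE /= coprimen2.
have gX : (g%:Z %| X)%Z.
  rewrite -(Gauss_dvdzl _ cop) mulrC EX Ea Eb; apply/dvdzP.
  exists (a1%:Z * s + d%:Z * b1%:Z * v); rewrite !PoszM; ring.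
have gY : (g%:Z %| Y)%Z.
  rewrite -(Gauss_dvdzl _ cop) mulrC EY Ea Eb; apply/dvdzP.
  exists (a1%:Z * v + b1%:Z * s); rewrite !PoszM; ring.
set G := gcdn `|X| `|Y|.
have gG : (g %| G)%N by rewrite dvdn_gcd; move: gX gY; rewrite !dvdzE /= => -> ->.
have GX : (G%:Z %| X)%Z by apply: dvdz_gcdl.
have GY : (G%:Z %| Y)%Z by apply: dvdz_gcdr.
have F1 : 2 * (s * X - d%:Z * v * Y) = a%:Z * (s * s - d%:Z * v * v).
  have -> : 2 * (s * X - d%:Z * v * Y) = s * (2 * X) - d%:Z * v * (2 * Y) by ring.
  rewrite EX EY; ring.
have F2 : 2 * (s * Y - v * X) = b%:Z * (s * s - d%:Z * v * v).
  have -> : 2 * (s * Y - v * X) = s * (2 * Y) - v * (2 * X) by ring.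
  rewrite EX EY; ring.
have D1 : (G%:Z %| s * X - d%:Z * v * Y)%Z by apply: rpredB; apply: dvdz_mull.
have D2 : (G%:Z %| s * Y - v * X)%Z by apply: rpredB; apply: dvdz_mull.
have Ga : (G %| 2 * a)%N.
  have : (G%:Z %| (2 * a)%N%:Z)%Z.
    move: D1 F1; set P := s * X - d%:Z * v * Y => D1 F1.
    case: Hs => Hs; rewrite Hs in F1.
    - by have -> : (2 * a)%N%:Z = P by clear -F1; lia.
    - have -> : (2 * a)%N%:Z = - P by clear -F1; lia.
      by rewrite rpredN.
  by rewrite dvdzE.
have Gb : (G %| 2 * b)%N.
  have : (G%:Z %| (2 * b)%N%:Z)%Z.
    move: D2 F2; set P := s * Y - v * X => D2 F2.
    case: Hs => Hs; rewrite Hs in F2.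
    - by have -> : (2 * b)%N%:Z = P by clear -F2; lia.
    - have -> : (2 * b)%N%:Z = - P by clear -F2; lia.
      by rewrite rpredN.
  by rewrite dvdzE.
have G2g : (G %| 2 * g)%N by rewrite /g muln_gcdr dvdn_gcd Ga Gb.
have [m Em] := dvdnP gG.
have {}G2g : (m %| 2)%N by rewrite -(dvdn_pmul2r g0) -Em.
have m2 : (m <= 2)%N by apply: dvdn_leq.
have m0 : m <> 0%N by move=> m0; rewrite m0 in G2g.
rewrite /gcdz -/G Em.
have : m = 1%N \/ m = 2%N by lia.
case=> ->; [left|right]; congr Posz; lia.
Qed.
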